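(* For all integers $n$ and $\alpha$ with $n\le\alpha\le 2^{n-1}+1$, there exists a minimal $n$-state nondeterministic finite automaton accepting a suffix-closed language whose equivalent minimal deterministic finite automaton has exactly $\alpha$ states.
   Context: NFAs have a single initial state and a transition function $\delta:Q\times\Sigma\to 2^Q$ that may map to the empty set (no sink state is needed or counted); DFAs are complete, so a sink state is counted. A minimal $n$-state NFA is an NFA with $n$ states such that no NFA with fewer states accepts the same language. A language $L\subseteq\Sigma^*$ is suffix-closed if $yz\in L$ implies $z\in L$ for all $y,z\in\Sigma^*$. *)

(* Defs.v *)
From mathcomp Require Import all_boot.
Set Implicit Arguments. Unset Strict Implicit. Unset Printing Implicit Defensive.

(* NFA over alphabet S with state set 'I_n: single initial state,
   transition function 'I_n -> S -> {set 'I_n} (may be empty, no sink counted). *)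
Record nfa (S : finType) (n : nat) := NFA {
  n_init : 'I_n;
  n_delta : 'I_n -> S -> {set 'I_n};
  n_final : {set 'I_n} }.

Definition nfa_reach (S : finType) (n : nat) (A : nfa S n) (X : {set 'I_n}) (w : seq S)
  : {set 'I_n} :=
  foldl (fun (Y : {set 'I_n}) (a : S) => \bigcup_(q in Y) n_delta A q a) X w.

Definition nfa_accepts (S : finType) (n : nat) (A : nfa S n) (w : seq S) : bool :=
  [exists q in nfa_reach A [set n_init A] w, q \in n_final A].

(* complete DFA with state set 'I_m (sink states are counted) *)
Record dfa (S : finType) (m : nat) := DFA {
  d_init : 'I_m;
  d_delta : 'I_m -> S -> 'I_m;
  d_final : {set 'I_m} }.

Definition dfa_accepts (S : finType) (m : nat) (D : dfa S m) (w : seq S) : bool :=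
  foldl (d_delta D) (d_init D) w \in d_final D.

Definition suffix_closed (S : finType) (L : seq S -> bool) : Prop :=
  forall y z : seq S, L (y ++ z) -> L z.

Definition minimal_nfa (S : finType) (n : nat) (A : nfa S n) : Prop :=
  forall (m : nat) (B : nfa S m), (forall w, nfa_accepts B w = nfa_accepts A w) -> n <= m.

Definition min_dfa_states (S : finType) (L : seq S -> bool) (alpha : nat) : Prop :=
  (exists D : dfa S alpha, forall w, dfa_accepts D w = L w) /\
  (forall (m : nat) (D : dfa S m), (forall w, dfa_accepts D w = L w) -> alpha <= m).

(* Main.v *)
Require Import Defs.
From mathcomp Require Import all_boot zify.
Set Implicit Arguments. Unset Strict Implicit. Unset Printing Implicit Defensive.

Section Generic.
Variables (S : finType) (n : nat) (B : nfa S n).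
Definition stp (X : {set 'I_n}) (a : S) := \bigcup_(q in X) n_delta B q a.
Lemma reach_cons X a w : nfa_reach B X (a :: w) = nfa_reach B (stp X a) w.
Proof. by []. Qed.
Lemma reach_nil X : nfa_reach B X [::] = X.
Proof. by []. Qed.
Lemma reach_cat X u v : nfa_reach B X (u ++ v) = nfa_reach B (nfa_reach B X u) v.
Proof. by rewrite /nfa_reach foldl_cat. Qed.
Lemma reach_mono w : forall X Y : {set 'I_n}, X \subset Y -> nfa_reach B X w \subset nfa_reach B Y w.
Proof.
elim: w => [|a w IH] X Y sXY; first by rewrite !reach_nil.
rewrite !reach_cons; apply: IH; apply/subsetP => x /bigcupP [q qX xq].
by apply/bigcupP; exists q => //; apply: (subsetP sXY).
Qed.
Lemma reach_elem w : forall (X : {set 'I_n}) x, x \in nfa_reach B X w -> exists2 q, q \in X & x \in nfa_reach B [set q] w.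
Proof.
elim: w => [|a w IH] X x.
  by rewrite !reach_nil => xX; exists x => //; rewrite in_set1.
rewrite reach_cons => /IH [p /bigcupP [q qX pq] xp]; exists q => //.
rewrite reach_cons; apply: (subsetP (reach_mono _ _)) xp.
apply/subsetP => y; rewrite in_set1 => /eqP->.
by apply/bigcupP; exists q; rewrite ?in_set1.
Qed.

Lemma acc_split x y q : q \in nfa_reach B [set n_init B] x ->
  [exists f in nfa_reach B [set q] y, f \in n_final B] -> nfa_accepts B (x ++ y).
Proof.
move=> qR /existsP [f /andP [fR fF]]; apply/existsP; exists f.
rewrite fF andbT reach_cat; apply: (subsetP (reach_mono _ _)) fR.
by rewrite sub1set.
Qed.

Lemma fooling (I : finType) (x y : I -> seq S) (L : seq S -> bool) :
  (forall w, nfa_accepts B w = L w) -> (forall i, L (x i ++ y i)) ->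
  (forall i j, i != j -> ~~ L (x i ++ y j) || ~~ L (x j ++ y i)) -> #|I| <= n.
Proof.
move=> HL Hd Hf.
pose P i q := (q \in nfa_reach B [set n_init B] (x i)) &&
   [exists f in nfa_reach B [set q] (y i), f \in n_final B].
have HP i : exists q, P i q.
  have := Hd i; rewrite -HL /nfa_accepts reach_cat => /existsP [f /andP [fR fF]].
  case: (reach_elem fR) => q qX fq; exists q; rewrite /P qX /=.
  by apply/existsP; exists f; rewrite fq fF.
pose h i := odflt (n_init B) [pick q | P i q].
have Hh i : P i (h i).
  rewrite /h; case: pickP => [q //|H]; case: (HP i) => q; by rewrite H.
have inj : injective h.
  move=> i j Hij; apply/eqP; apply/negPn/negP => nij.
  have /andP [Ri Ai] := Hh i; have /andP [Rj Aj] := Hh j.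
  have := Hf _ _ nij; rewrite -!HL.
  have Ai' : [exists f in nfa_reach B [set h i] (y j), f \in n_final B] by rewrite Hij.
  have Aj' : [exists f in nfa_reach B [set h j] (y i), f \in n_final B] by rewrite -Hij.
  by rewrite (acc_split Ri Ai') (acc_split Rj Aj').
by have := leq_card h inj; rewrite card_ord.
Qed.
Lemma stp_set1 q a : stp [set q] a = n_delta B q a.
Proof. by rewrite /stp big_set1. Qed.

Lemma suffix_dom : (forall q a, n_delta B q a \subset n_delta B (n_init B) a) ->
  n_init B \in n_final B -> suffix_closed (nfa_accepts B).
Proof.
move=> Hd Hf y [|a z].
  by move=> _; apply/existsP; exists (n_init B); rewrite reach_nil in_set1 eqxx.
case/existsP => f /andP [fR fF]; apply/existsP; exists f; rewrite fF andbT.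
move: fR; rewrite reach_cat !reach_cons; apply/subsetP/reach_mono.
rewrite stp_set1; apply/bigcupsP => q _; exact: Hd.
Qed.
End Generic.

Lemma dfa_lower (S : finType) (L : seq S -> bool) (I : finType) (w : I -> seq S) :
  (forall i j, i != j -> exists z, L (w i ++ z) != L (w j ++ z)) ->
  forall m (D : dfa S m), (forall u, dfa_accepts D u = L u) -> #|I| <= m.
Proof.
move=> Hd m D HD.
pose h i := foldl (d_delta D) (d_init D) (w i).
have inj : injective h.
  move=> i j Hij; apply/eqP; apply/negPn/negP => nij.
  case: (Hd _ _ nij) => z; rewrite -!HD /dfa_accepts !foldl_cat.
  by rewrite -/(h i) -/(h j) Hij eqxx.
by have := leq_card h inj; rewrite card_ord.
Qed.

Lemma dfa_of_fin (S T : finType) (i : T) (d : T -> S -> T) (f : pred T) :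
  exists D : dfa S #|T|, forall w, dfa_accepts D w = f (foldl d i w).
Proof.
exists (DFA (enum_rank i) (fun p a => enum_rank (d (enum_val p) a)) [set p | f (enum_val p)]).
move=> w; rewrite /dfa_accepts /=.
suff -> : forall x, foldl (fun p a => enum_rank (d (enum_val p) a)) (enum_rank x) w
   = enum_rank (foldl d x w) by rewrite inE enum_rankK.
by elim: w => [|a w IH] x //=; rewrite enum_rankK IH.
Qed.

Lemma subset_card (T : finType) (A : {set T}) m : m <= #|A| -> exists2 E : {set T}, E \subset A & #|E| = m.
Proof.
elim: m => [|m IH] H; first by exists set0; rewrite ?sub0set ?cards0.
case: IH; first exact: ltnW.
move=> E sEA cE.
have : E \proper A by rewrite properEcard sEA cE.
case/properP => _ [x xA xE]; exists (x |: E).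
  by rewrite subUset sub1set xA sEA.
by rewrite cardsU1 xE cE.
Qed.

Section Spec.
Variable k : nat.
Definition z0 : 'I_k.+1 := ord0.
Definition g : 'I_k.+1 := ord_max.
Definition Sing : {set {set 'I_k.+1}} := [set [set i] | i in [set~ z0]].
Definition NoZero : {set {set 'I_k.+1}} := powerset [set~ z0].
Definition Pool := NoZero :\: Sing.
Variable Extra : {set {set 'I_k.+1}}.
Hypothesis HE : Extra \subset Pool.
Definition Fam := [set z0] |: (Sing :|: Extra).
Definition T := {X : {set 'I_k.+1} | X \in Fam}.
Definition Sig := (T + 'I_k.+1)%type.
Definition delta (q : 'I_k.+1) (a : Sig) : {set 'I_k.+1} :=
  match a with inl X => val X | inr i => if (q == z0) || (q == i) then [set z0; g] else [set g] end.
Definition A : nfa Sig k.+1 := NFA z0 delta [set z0].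

Lemma dom q a : delta q a \subset delta z0 a.
Proof.
case: a => [X|i] /=; first by [].
case: ifP => _ //; by rewrite sub1set !inE eqxx orbT.
Qed.

Lemma Fam_can X : X \in Fam -> z0 \in X -> X = [set z0].
Proof.
rewrite !inE => /orP [/eqP //|/orP [/imsetP [i]|XE]].
  by rewrite !inE => iz -> ; rewrite inE eq_sym (negbTE iz).
move: (subsetP HE _ XE); rewrite inE => /andP [_]; rewrite powersetE => /subsetP sX /sX.
by rewrite !inE eqxx.
Qed.

Lemma FamZ : [set z0] \in Fam.
Proof. by rewrite !inE eqxx. Qed.
Lemma Fam_sing i : [set i] \in Fam.
Proof.
case: (eqVneq i z0) => [->|iz]; first exact: FamZ.
by rewrite !inE; apply/orP; right; apply/orP; left; apply/imsetP; exists i; rewrite ?inE.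
Qed.

Lemma notz (X : {set 'I_k.+1}) : X \in Fam -> X != [set z0] -> z0 \notin X.
Proof. by move=> XF; apply: contra => /(Fam_can XF) ->. Qed.

Lemma gz (i : 'I_k.+1) : i != z0 -> g != z0.
Proof.
move=> iz; apply/eqP => /(congr1 val) /= gz0; move: iz; apply/negP/negPn/eqP.
apply: val_inj => /=; have := ltn_ord i; rewrite /= in gz0; lia.
Qed.

Definition canon (X : {set 'I_k.+1}) := if z0 \in X then [set z0] else X.

Lemma step0 (X : {set 'I_k.+1}) a : z0 \in X -> stp A X a = delta z0 a.
Proof.
move=> zX; apply/eqP; rewrite eqEsubset; apply/andP; split.
  by apply/bigcupsP => q _; apply: dom.
exact: (bigcup_sup z0 zX).
Qed.

Lemma canon_step (Y : {set 'I_k.+1}) a : canon (stp A (canon Y) a) = canon (stp A Y a).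
Proof. rewrite /canon; case: (boolP (z0 \in Y)) => zY //=; by rewrite stp_set1 step0. Qed.

Lemma canon_in (X : {set 'I_k.+1}) : z0 \in canon X = (z0 \in X).
Proof. by rewrite /canon; case: ifP => h; rewrite ?in_set1 ?eqxx. Qed.

Lemma canonF (X : {set 'I_k.+1}) : X \in Fam -> canon X \in Fam.
Proof. by rewrite /canon; case: ifP => // _ _; exact: FamZ. Qed.

Lemma closure (X : {set 'I_k.+1}) a : X \in Fam -> canon (stp A X a) \in Fam.
Proof.
move=> XF; case: (set_0Vmem X) => [X0|[x xX]].
  by rewrite X0 /stp big_set0 /canon in_set0 -X0.
case: a => [Y|i].
  apply: canonF; suff -> : stp A X (inl Y : Sig) = val Y by exact: valP.
  apply/eqP; rewrite eqEsubset; apply/andP; split.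
    by apply/bigcupsP => q _ /=; exact: subxx.
  rewrite /stp; exact: (bigcup_sup x xX).
case: (boolP (z0 \in stp A X (inr i : Sig))) => zS.
  by rewrite /canon zS FamZ.
rewrite /canon (negbTE zS).
suff -> : stp A X (inr i : Sig) = [set g] by apply: Fam_sing.
apply/eqP; rewrite eqEsubset; apply/andP; split.
  apply/subsetP => y /bigcupP [q qX].
  have zq : z0 \notin n_delta A q (inr i : Sig).
    by apply: contra zS => h; apply/bigcupP; exists q.
  move: zq; rewrite /A /= /delta; case: ifP => _; rewrite !inE ?eqxx //.
apply/subsetP => y; rewrite in_set1 => /eqP ->.
apply/bigcupP; exists x => //; rewrite /A /= /delta; case: ifP => _; rewrite !inE eqxx ?orbT //.
Qed.

Lemma acc_char w : nfa_accepts A w = (z0 \in nfa_reach A [set z0] w).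
Proof.
apply/existsP/idP => [[f /andP [fR]]|h]; first by rewrite /A /= in fR *; rewrite in_set1 => /eqP fz; rewrite fz in fR.
by exists z0; rewrite /A /= in h *; rewrite h in_set1 eqxx.
Qed.

Definition T0 : T := exist _ [set z0] FamZ.
Definition dT (X : T) (a : Sig) : T := exist _ (canon (stp A (val X) a)) (closure a (valP X)).

Lemma inv w : forall (X : T) Y, val X = canon Y -> val (foldl dT X w) = canon (nfa_reach A Y w).
Proof.
elim: w => [|a w IH] X Y hX; first by rewrite reach_nil.
rewrite reach_cons; apply: IH; by rewrite /= hX canon_step.
Qed.

Lemma upper : exists D : dfa Sig #|{: T}|, forall w, dfa_accepts D w = nfa_accepts A w.
Proof.
have [D HD] := dfa_of_fin T0 dT (fun X => z0 \in val X).
exists D => w; rewrite HD acc_char (inv w (Y := [set z0])) ?canon_in //.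
by rewrite /canon in_set1 eqxx.
Qed.

Lemma reach_inl (X : T) z : nfa_reach A [set z0] ((inl X : Sig) :: z) = nfa_reach A (val X) z.
Proof. by rewrite reach_cons stp_set1. Qed.

Lemma stp_inr (Z : {set 'I_k.+1}) i : z0 \notin Z -> i != z0 ->
  (z0 \in stp A Z (inr i : Sig)) = (i \in Z).
Proof.
move=> zZ iz; apply/bigcupP/idP => [[q qZ]|iZ].
  rewrite /A /= /delta; case: ifP => [/orP [/eqP qz|/eqP qi]|_].
  - by move: zZ; rewrite -qz qZ.
  - by rewrite -qi.
  by rewrite in_set1 eq_sym (negbTE (gz iz)).
by exists i => //; rewrite /A /= /delta eqxx orbT !inE eqxx.
Qed.

Lemma distinguish : forall X Y : T, X != Y -> exists z,
  nfa_accepts A ([:: inl X] ++ z) != nfa_accepts A ([:: inl Y] ++ z).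
Proof.
move=> X Y XY; have vXY : val X != val Y by apply: contra XY => /eqP h; apply/eqP/val_inj.
case: (eqVneq (val X) [set z0]) => [Xz|Xz].
  exists [::]; rewrite !acc_char !cats0 !reach_inl !reach_nil Xz in_set1 eqxx.
  by rewrite (negbTE (notz (valP Y) _)) // -Xz eq_sym.
case: (eqVneq (val Y) [set z0]) => [Yz|Yz].
  exists [::]; rewrite !acc_char !cats0 !reach_inl !reach_nil Yz in_set1 eqxx.
  by rewrite (negbTE (notz (valP X) _)).
have zX := notz (valP X) Xz; have zY := notz (valP Y) Yz.
have [i Hi] : exists i, (i \in val X) != (i \in val Y).
  apply/existsP; apply: contraR vXY => /existsPn h; apply/eqP/setP => i.
  by have := h i; rewrite negbK => /eqP.
have iz : i != z0.
  apply: contra Hi => /eqP ->; by rewrite (negbTE zX) (negbTE zY).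
exists [:: inr i]; rewrite !acc_char !cat1s !reach_inl !reach_cons !reach_nil.
by rewrite !stp_inr.
Qed.

Definition xf (i : 'I_k.+1) : seq Sig := [:: inl (exist _ [set i] (Fam_sing i))].
Definition yf (i : 'I_k.+1) : seq Sig := if i == z0 then [::] else [:: inr i].

Lemma Lxy i j : nfa_accepts A (xf i ++ yf j) = (i == z0) || (i == j).
Proof.
rewrite acc_char /xf /yf; case: ifP => [/eqP ->|jz].
  by rewrite cat1s reach_inl reach_nil /= in_set1 eq_sym orbb.
rewrite cat1s reach_inl reach_cons reach_nil stp_set1 /= /delta.
case: ifP => [_|]; first by rewrite !inE eqxx.
by move=> _; rewrite in_set1 eq_sym (negbTE (gz (negbT jz))).
Qed.

Lemma nfa_min : minimal_nfa A.
Proof.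
move=> m B HB.
have := fooling (x := xf) (y := yf) HB.
rewrite card_ord; apply.
  by move=> i; rewrite Lxy eqxx orbT.
move=> i j ij; rewrite !Lxy; case: (eqVneq i z0) => [iz|iz] /=.
  by rewrite -iz orbb eq_sym.
by rewrite ij.
Qed.

Lemma suff_cl : suffix_closed (nfa_accepts A).
Proof. apply: suffix_dom; [exact: dom | by rewrite in_set1]. Qed.

Lemma lower m (D : dfa Sig m) : (forall w, dfa_accepts D w = nfa_accepts A w) -> #|{: T}| <= m.
Proof. by apply: (dfa_lower (w := fun X : T => [:: inl X])) => X Y; apply: distinguish. Qed.
End Spec.

Lemma card_Sing k : #|Sing k| = k.
Proof. by rewrite card_imset; [rewrite cardsC1 card_ord | exact: set1_inj]. Qed.

Lemma Sing_sub k : Sing k \subset NoZero k.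
Proof.
apply/subsetP => X /imsetP [i]; rewrite !inE => iz ->.
by rewrite sub1set !inE.
Qed.

Lemma card_Pool k : #|Pool k| = 2 ^ k - k.
Proof.
rewrite cardsD (setIidPr (Sing_sub k)) card_Sing /NoZero card_powerset cardsC1 card_ord.
by [].
Qed.

Lemma card_Fam k (E : {set {set 'I_k.+1}}) : E \subset Pool k -> #|Fam E| = k.+1 + #|E|.
Proof.
move=> HE; rewrite /Fam cardsU1 cardsU.
have -> : Sing k :&: E = set0.
  apply/setP => X; rewrite !inE; apply/negP => /andP [XS XE].
  by move: (subsetP HE _ XE); rewrite inE XS.
have -> : [set z0 k] \notin Sing k :|: E.
  apply/negP; rewrite inE => /orP [/(subsetP (Sing_sub k))|/(subsetP HE)].
    by rewrite /NoZero powersetE sub1set !inE eqxx.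
  by rewrite inE => /andP [_]; rewrite /NoZero powersetE sub1set !inE eqxx.
by rewrite cards0 subn0 card_Sing.
Qed.

Theorem mainTheorem8 (n alpha : nat) :
  1 <= n -> n <= alpha -> alpha <= 2 ^ n.-1 + 1 ->
  exists (S : finType) (A : nfa S n),
    [/\ minimal_nfa A, suffix_closed (nfa_accepts A) & min_dfa_states (nfa_accepts A) alpha].
Proof.
case: n => [//|k] _ nal alup; rewrite /= in alup.
have k2 : k < 2 ^ k by apply: ltn_expl.
have [E sE cE] := @subset_card _ (Pool k) (alpha - k.+1) ltac:(rewrite card_Pool; lia).
have HT : #|{: T E}| = alpha.
  have -> : #|{: T E}| = #|Fam E| by rewrite card_sig; apply: eq_card => x; rewrite inE.
  rewrite card_Fam // cE; lia.
exists (Sig E), (A E); split.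
- exact: nfa_min.
- exact: suff_cl.
- split.
  + rewrite -HT; exact: upper.
  + by move=> m D HD; rewrite -HT; apply: (lower sE HD).
Qed.
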